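(* Let $n\ge 2$, $0\le\alpha<1$ and $\beta=1-\alpha$. Then for all $x,y\in\mathbb{R}^n\setminus\{0\}$, $$k_\alpha(x,y)\le\frac{|x|^\beta+|y|^\beta}{\beta}.$$
   Context: $k_\alpha(x,y)=\inf_\gamma\int_\gamma|z|^{-\alpha}|dz|$, the infimum over all rectifiable paths $\gamma$ in $\mathbb{R}^n\setminus\{0\}$ joining $x$ and $y$. *)

(* Defs.v *)
From HB Require Import structures.
From mathcomp Require Import all_boot all_order all_algebra.
From mathcomp Require Import all_classical all_reals all_analysis.
Set Implicit Arguments. Unset Strict Implicit. Unset Printing Implicit Defensive.
Import Order.TTheory GRing.Theory Num.Theory.
Local Open Scope classical_set_scope.
Local Open Scope ring_scope.

Definition enorm {R : realType} {n : nat} (z : 'rV[R]_n) : R :=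
  Num.sqrt (\sum_(i < n) z ord0 i ^+ 2).

(* s is a partition a = t_0 < t_1 < ... < t_m = b of [a,b] (t_0 = a not listed) *)
Definition is_partition {R : realType} (a b : R) (s : seq R) : Prop :=
  path (fun u v => u < v) a s /\ last a s = b.

Definition chord_sum {R : realType} {n : nat} (g : R -> 'rV[R]_n)
  (a : R) (s : seq R) : R :=
  \sum_(d <- pairmap (fun u v => enorm (g v - g u)) a s) d.

Definition path_length {R : realType} {n : nat} (g : R -> 'rV[R]_n) (a b : R)
  : \bar R :=
  ereal_sup [set (chord_sum g a s)%:E | s in [set s | is_partition a b s]].

Definition arclen {R : realType} {n : nat} (g : R -> 'rV[R]_n) (t : R) : R :=
  fine (path_length g 0 t).

Definition admissible_path {R : realType} {n : nat} (x y : 'rV[R]_n)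
  (g : R -> 'rV[R]_n) : Prop :=
  [/\ g 0 = x, g 1 = y,
      (forall t, 0 <= t <= 1 -> g t != 0),
      (forall t, 0 <= t <= 1 -> forall e : R, 0 < e -> exists2 d : R, 0 < d &
          forall u, 0 <= u <= 1 -> `|u - t| < d -> enorm (g u - g t) < e) &
      (path_length g 0 1 < +oo)%E].

Definition lower_sum {R : realType} {n : nat} (f : 'rV[R]_n -> R)
  (g : R -> 'rV[R]_n) (s : seq R) : R :=
  \sum_(d <- pairmap (fun u v =>
       inf [set f (g w) | w in [set w | u <= w <= v]] * (arclen g v - arclen g u))
       0 s) d.

(* line integral  int_g f |dz|  (Riemann-Stieltjes integral w.r.t. arc length,
   as the supremum of lower sums; f continuous, g rectifiable) *)
Definition line_integral {R : realType} {n : nat} (f : 'rV[R]_n -> R)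
  (g : R -> 'rV[R]_n) : \bar R :=
  ereal_sup [set (lower_sum f g s)%:E | s in [set s | is_partition 0 1 s]].

Definition k_alpha {R : realType} {n : nat} (alpha : R) (x y : 'rV[R]_n)
  : \bar R :=
  ereal_inf [set line_integral (fun z => powR (enorm z) (- alpha)) g
            | g in [set g | admissible_path x y g]].

(* Main.v *)
Require Import Defs.
From HB Require Import structures.
From mathcomp Require Import all_boot all_order all_algebra.
From mathcomp Require Import all_classical all_reals all_analysis.
From mathcomp Require Import ring lra.
Import Order.TTheory GRing.Theory Num.Theory.
Set Implicit Arguments. Unset Strict Implicit. Unset Printing Implicit Defensive.
Local Open Scope classical_set_scope.
Local Open Scope ring_scope.

Section Dot.
Variables (R : realType) (n : nat).
Implicit Types (a b c : 'rV[R]_n) (k : R).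

Definition dot a b : R := \sum_(i < n) a ord0 i * b ord0 i.

Lemma dotC a b : dot a b = dot b a.
Proof. by apply: eq_bigr => i _; rewrite mulrC. Qed.

Lemma dotDl a b c : dot (a + b) c = dot a c + dot b c.
Proof. by rewrite /dot -big_split; apply: eq_bigr => i _; rewrite !mxE mulrDl. Qed.

Lemma dotZl k a b : dot (k *: a) b = k * dot a b.
Proof. by rewrite /dot mulr_sumr; apply: eq_bigr => i _; rewrite !mxE mulrA. Qed.

Lemma dotNl a b : dot (- a) b = - dot a b.
Proof. by rewrite -scaleN1r dotZl mulN1r. Qed.

Lemma dotDr a b c : dot a (b + c) = dot a b + dot a c.
Proof. by rewrite dotC dotDl !(dotC a). Qed.

Lemma dotZr k a b : dot a (k *: b) = k * dot a b.
Proof. by rewrite dotC dotZl dotC. Qed.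

Lemma dotBl a b c : dot (a - b) c = dot a c - dot b c.
Proof. by rewrite dotDl dotNl. Qed.

Lemma dotBr a b c : dot a (b - c) = dot a b - dot a c.
Proof. by rewrite dotC dotBl !(dotC a). Qed.

Lemma dot_ge0 a : 0 <= dot a a.
Proof. by apply: sumr_ge0 => i _; rewrite -expr2 sqr_ge0. Qed.

Lemma dot_eq0 a : dot a a = 0 -> a = 0.
Proof.
move=> h; apply/rowP => i; rewrite mxE.
have /psumr_eq0P := h; move=> /(_ (fun i _ => _)) H.
have : a ord0 i * a ord0 i = 0.
  apply: (psumr_eq0P _ h) => //= j _; by rewrite -expr2 sqr_ge0.
by move/eqP; rewrite mulf_eq0 orbb => /eqP.
Qed.

Lemma enormE a : enorm a = Num.sqrt (dot a a).
Proof. by rewrite /enorm /dot; congr Num.sqrt; apply: eq_bigr => i _; rewrite expr2. Qed.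

Lemma enorm_ge0 a : 0 <= enorm a.
Proof. by rewrite enormE sqrtr_ge0. Qed.

Lemma enorm_sqr a : enorm a ^+ 2 = dot a a.
Proof. by rewrite enormE sqr_sqrtr // dot_ge0. Qed.

Lemma enorm_gt0 a : a != 0 -> 0 < enorm a.
Proof.
move=> a0; rewrite lt_neqAle enorm_ge0 andbT eq_sym; apply/eqP => h.
by move/eqP: a0; apply; apply: dot_eq0; rewrite -enorm_sqr h expr0n.
Qed.

Lemma enormZ k a : enorm (k *: a) = `|k| * enorm a.
Proof.
rewrite !enormE dotZl dotZr mulrA sqrtrM ?sqr_ge0 //.
by rewrite -expr2 sqrtr_sqr.
Qed.

Lemma enormN a : enorm (- a) = enorm a.
Proof. by rewrite -scaleN1r enormZ normrN normr1 mul1r. Qed.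

Lemma enormB a b : enorm (a - b) = enorm (b - a).
Proof. by rewrite -enormN opprB. Qed.

Lemma cauchy_schwarz a b : dot a b <= enorm a * enorm b.
Proof.
have [->|a0] := eqVneq a 0.
  by rewrite /dot big1 ?mulr_ge0 ?enorm_ge0 // => i _; rewrite mxE mul0r.
have A0 : 0 < dot a a by rewrite -enorm_sqr exprn_gt0 // enorm_gt0.
pose t := dot a b / dot a a.
have h := dot_ge0 (t *: a - b).
rewrite dotBl !dotBr !dotZl !dotZr (dotC b a) in h.
have key : dot a b ^+ 2 <= dot a a * dot b b.
  have e : t * (t * dot a a) = dot a b ^+ 2 / dot a a.
    by rewrite /t; field; rewrite lt0r_neq0.
  have e2 : t * dot a b = dot a b ^+ 2 / dot a a.
    by rewrite /t; field; rewrite lt0r_neq0.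
  rewrite e e2 in h.
  have : 0 <= dot b b - dot a b ^+ 2 / dot a a by lra.
  rewrite subr_ge0 ler_pdivrMr //; by rewrite mulrC.
apply: (le_trans (ler_norm _)).
rewrite -[`|dot a b|]sqrtr_sqr !enormE -sqrtrM ?dot_ge0 //.
by rewrite ler_sqrt // mulr_ge0 ?dot_ge0.
Qed.

Lemma enormD a b : enorm (a + b) <= enorm a + enorm b.
Proof.
rewrite -[enorm a + enorm b]ger0_norm ?addr_ge0 ?enorm_ge0 //.
rewrite -sqrtr_sqr enormE ler_sqrt ?sqr_ge0 //.
rewrite dotDl !dotDr (dotC b a) sqrrD -!enorm_sqr.
have := cauchy_schwarz a b; lra.
Qed.

Lemma enorm_tri a b c : enorm (c - a) <= enorm (c - b) + enorm (b - a).
Proof. by rewrite -[c - a](subrKA b) enormD. Qed.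

End Dot.

Section Glue.
Variables (R : realType) (n : nat).
Implicit Types (g : R -> 'rV[R]_n) (S Phi : R -> R) (h : 'rV[R]_n -> R).

Definition LIP g S (K a b : R) := forall u v, a <= u -> u <= v -> v <= b ->
  enorm (g v - g u) <= S v - S u /\ S v - S u <= K * (v - u).
Definition REACH g S (a b : R) := forall t, a <= t -> t <= b ->
  exists s, [/\ path (fun u v : R => u < v) a s, last a s = t &
                S t - S a <= chord_sum g a s].
Definition imset h g (u v : R) := [set h (g w) | w in [set w | u <= w <= v]].
Definition LOW h g S Phi (a b : R) := forall u v, a <= u -> u <= v -> v <= b ->
  inf (imset h g u v) * (S v - S u) <= Phi v - Phi u.
Definition good h g (K a b B : R) := exists S Phi,
  [/\ LIP g S K a b, REACH g S a b, LOW h g S Phi a b, Phi b - Phi a <= B &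
      forall t, a <= t -> t <= b -> g t != 0].

Definition glue {T : Type} (b : R) (f1 f2 : R -> T) := fun t => if t <= b then f1 t else f2 t.

Lemma glue_l T b (f1 f2 : R -> T) t : t <= b -> glue b f1 f2 t = f1 t.
Proof. by rewrite /glue => ->. Qed.

Lemma glue_r T b (f1 f2 : R -> T) t : f1 b = f2 b -> b <= t -> glue b f1 f2 t = f2 t.
Proof.
rewrite /glue => e bt; case: ifP => // tb.
by have -> : t = b by apply/eqP; rewrite eq_le tb bt.
Qed.

Arguments glue_l {T b} f1 f2 {t}.
Arguments glue_r {T b} f1 f2 {t}.

Lemma last_ge a s : path (fun u v : R => u < v) a s -> a <= last a s.
Proof.
elim: s a => [|x s IH] a //= /andP[ax px].
exact: le_trans (ltW ax) (IH _ px).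
Qed.

Lemma mem_path_bnd a s w : path (fun u v : R => u < v) a s -> w \in s ->
  a < w /\ w <= last a s.
Proof.
elim: s a => [|x s IH] a //= /andP[ax px]; rewrite inE => /predU1P[->|ws].
  by split => //; apply: last_ge.
have [h1 h2] := IH _ px ws; split => //; exact: lt_trans ax h1.
Qed.

Lemma chord_sum_cons g a x s :
  chord_sum g a (x :: s) = enorm (g x - g a) + chord_sum g x s.
Proof. by rewrite /chord_sum /= big_cons. Qed.

Lemma chord_sum_cat g a s1 s2 :
  chord_sum g a (s1 ++ s2) = chord_sum g a s1 + chord_sum g (last a s1) s2.
Proof. by rewrite /chord_sum pairmap_cat big_cat. Qed.

Lemma chord_sum_ext g g' a s : (forall w, w \in a :: s -> g w = g' w) ->
  chord_sum g a s = chord_sum g' a s.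
Proof.
elim: s a => [|x s IH] a e //; rewrite !chord_sum_cons.
rewrite (e x) ?inE ?eqxx ?orbT // (e a) ?inE ?eqxx // (IH x) // => w ws.
by apply: e; rewrite inE ws orbT.
Qed.

Lemma imset_ext h g g' u v : (forall w, u <= w -> w <= v -> g w = g' w) ->
  imset h g u v = imset h g' u v.
Proof.
move=> e; rewrite /imset; apply/seteqP; split => z [w /= /andP[uw wv] <-];
  by exists w => //=; [rewrite uw wv | rewrite e].
Qed.

Lemma inf_le_pt h g u v w : (forall z, 0 <= h z) -> u <= w -> w <= v ->
  inf (imset h g u v) <= h (g w).
Proof.
move=> h0 uw wv; apply: ge_inf; last by exists w => //=; rewrite uw wv.
by exists 0 => z [w' _ <-].
Qed.

Lemma inf_ge0 h g u v : (forall z, 0 <= h z) -> u <= v -> 0 <= inf (imset h g u v).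
Proof.
move=> h0 uv; apply: lb_le_inf; first by exists (h (g u)), u => //=; rewrite lexx uv.
by move=> z [w' _ <-].
Qed.

Lemma inf_sub h g u v u' v' : (forall z, 0 <= h z) -> u <= u' -> u' <= v' -> v' <= v ->
  inf (imset h g u v) <= inf (imset h g u' v').
Proof.
move=> h0 uu u'v' vv; apply: lb_le_inf.
  by exists (h (g u')), u' => //=; rewrite lexx u'v'.
move=> z [w /= /andP[h1 h2] <-]; apply: inf_le_pt => //.
  exact: le_trans uu h1.
exact: le_trans h2 vv.
Qed.

Lemma good_glue h K a b c B1 B2 g1 g2 : (forall z, 0 <= h z) ->
  a <= b -> b <= c -> g1 b = g2 b ->
  good h g1 K a b B1 -> good h g2 K b c B2 -> good h (glue b g1 g2) K a c (B1 + B2).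
Proof.
move=> h0 ab bc e [S1 [P1 [L1 R1 W1 B1e N1]]] [S2 [P2 [L2 R2 W2 B2e N2]]].
pose S := glue b S1 (fun t => S2 t - S2 b + S1 b).
pose P := glue b P1 (fun t => P2 t - P2 b + P1 b).
have eS : S1 b = S2 b - S2 b + S1 b by ring.
have eP : P1 b = P2 b - P2 b + P1 b by ring.
exists S, P; split.
- move=> u v au uv vc.
  have [vb|bv] := leP v b.
    have ub := le_trans uv vb.
    by rewrite /S !glue_l //; apply: L1.
  have [ub|bu] := leP u b.
    rewrite /S (glue_l g1 g2 ub) (glue_r g1 g2 e (ltW bv)) (glue_l S1 _ ub).
    rewrite (glue_r S1 (fun t => S2 t - S2 b + S1 b) eS (ltW bv)).
    have [l1 l2] := L1 u b au ub (lexx b).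
    have [l3 l4] := L2 b v (lexx b) (ltW bv) vc.
    split.
      rewrite e in l1; apply: (le_trans (@enorm_tri _ _ (g1 u) (g2 b) (g2 v))); lra.
    lra.
  rewrite /S !glue_r // ?(ltW bu) ?(le_trans (ltW bu) uv) //.
  have [l3 l4] := L2 u v (ltW bu) uv vc.
  split; lra.
- move=> t at_ tc.
  have [tb|bt] := leP t b.
    have [s [ps ls hs]] := R1 t at_ tb.
    exists s; split => //.
    rewrite /S !glue_l //; apply: (le_trans hs); rewrite le_eqVlt; apply/orP; left; apply/eqP.
    apply: chord_sum_ext => w; rewrite inE => /predU1P[->|ws].
      by rewrite glue_l.
    have [_ h2] := mem_path_bnd ps ws; rewrite glue_l //; rewrite ls in h2.
    exact: le_trans h2 tb.
  have [s1 [ps1 ls1 hs1]] := R1 b ab (lexx b).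
  have [s2 [ps2 ls2 hs2]] := R2 t (ltW bt) tc.
  have at_ab : a <= b := ab.
  exists (s1 ++ s2); split.
  + by rewrite cat_path ps1 ls1 ps2.
  + by rewrite last_cat ls1.
  + rewrite chord_sum_cat ls1 /S (glue_l S1 _ at_ab) (glue_r S1 (fun t => S2 t - S2 b + S1 b) eS (ltW bt)).
    have -> : chord_sum (glue b g1 g2) a s1 = chord_sum g1 a s1.
      apply: chord_sum_ext => w; rewrite inE => /predU1P[->|ws].
        by rewrite glue_l.
      have [_ h2] := mem_path_bnd ps1 ws; rewrite glue_l //; rewrite ls1 in h2.
      exact: h2.
    have -> : chord_sum (glue b g1 g2) b s2 = chord_sum g2 b s2.
      apply: chord_sum_ext => w; rewrite inE => /predU1P[->|ws].
        by rewrite glue_r.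
      have [h1 _] := mem_path_bnd ps2 ws; rewrite glue_r // ltW //.
    have := hs1; have := hs2.
    lra.
- move=> u v au uv vc.
  have [vb|bv] := leP v b.
    have ub := le_trans uv vb.
    rewrite /S /P !glue_l //.
    have -> : imset h (glue b g1 g2) u v = imset h g1 u v.
      by apply: imset_ext => w uw wv; rewrite glue_l // (le_trans wv).
    by apply: W1.
  have [ub|bu] := leP u b.
    rewrite /S /P (glue_l S1 _ ub) (glue_r S1 (fun t => S2 t - S2 b + S1 b) eS (ltW bv)).
    rewrite (glue_l P1 _ ub) (glue_r P1 (fun t => P2 t - P2 b + P1 b) eP (ltW bv)).
    set I := inf _.
    have I1 : I <= inf (imset h g1 u b).
      have -> : imset h g1 u b = imset h (glue b g1 g2) u b.
        by apply: imset_ext => w _ wb; rewrite glue_l.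
      by apply: inf_sub => //; apply: ltW.
    have I2 : I <= inf (imset h g2 b v).
      have -> : imset h g2 b v = imset h (glue b g1 g2) b v.
        by apply: imset_ext => w bw _; rewrite glue_r.
      by apply: inf_sub => //; apply: ltW.
    have [l1 _] := L1 u b au ub (lexx b).
    have [l3 _] := L2 b v (lexx b) (ltW bv) vc.
    have d1 : 0 <= S1 b - S1 u := le_trans (enorm_ge0 _) l1.
    have d2 : 0 <= S2 v - S2 b := le_trans (enorm_ge0 _) l3.
    have w1 := W1 u b au ub (lexx b).
    have w2 := W2 b v (lexx b) (ltW bv) vc.
    have m1 : I * (S1 b - S1 u) <= inf (imset h g1 u b) * (S1 b - S1 u) by apply: ler_wpM2r.
    have m2 : I * (S2 v - S2 b) <= inf (imset h g2 b v) * (S2 v - S2 b) by apply: ler_wpM2r.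
    have -> : S2 v - S2 b + S1 b - S1 u = (S1 b - S1 u) + (S2 v - S2 b) by ring.
    rewrite mulrDr; lra.
  rewrite /S /P !glue_r // ?(ltW bu) ?(le_trans (ltW bu) uv) //.
  have -> : imset h (glue b g1 g2) u v = imset h g2 u v.
    by apply: imset_ext => w uw wv; rewrite glue_r // (le_trans (ltW bu)).
  have := W2 u v (ltW bu) uv vc.
  have -> : S2 v - S2 b + S1 b - (S2 u - S2 b + S1 b) = S2 v - S2 u by ring.
  have -> : P2 v - P2 b + P1 b - (P2 u - P2 b + P1 b) = P2 v - P2 u by ring.
  done.
- rewrite /P glue_r // glue_l //; lra.
- move=> t at_ tc; have [tb|bt] := leP t b.
    by rewrite glue_l //; apply: N1.
  by rewrite glue_r // ?(ltW bt) //; apply: N2 => //; apply: ltW.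
Qed.


Lemma chord_le g S K a s : LIP g S K 0 1 -> path (fun u v : R => u < v) a s ->
  0 <= a -> last a s <= 1 -> chord_sum g a s <= S (last a s) - S a.
Proof.
move=> L; elim: s a => [|x s IH] a /=; first by rewrite /chord_sum /= big_nil subrr.
move=> /andP[ax px] a0 l1; rewrite chord_sum_cons.
have xl := last_ge px.
have x1 := le_trans xl l1.
have [h1 _] := L a x a0 (ltW ax) x1.
have := IH x px (le_trans a0 (ltW ax)) l1; lra.
Qed.

Lemma path_length_eq g S K t : LIP g S K 0 1 -> REACH g S 0 1 -> 0 <= t -> t <= 1 ->
  path_length g 0 t = (S t - S 0)%:E.
Proof.
move=> L Rc t0 t1; apply/eqP; rewrite eq_le; apply/andP; split.
  apply: ge_ereal_sup => z [s [ps ls] <-]; rewrite lee_fin -ls.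
  by apply: chord_le L ps (lexx 0) _; rewrite ls.
have [s [ps ls hs]] := Rc t t0 t1.
apply: le_ereal_sup_tmp; exists (chord_sum g 0 s)%:E; last by rewrite lee_fin.
by exists s.
Qed.

Lemma arclen_eq g S K t : LIP g S K 0 1 -> REACH g S 0 1 -> 0 <= t -> t <= 1 ->
  arclen g t = S t - S 0.
Proof. by move=> L Rc t0 t1; rewrite /arclen (path_length_eq L Rc t0 t1). Qed.

Lemma lower_le h g S K Phi a s : LIP g S K 0 1 -> REACH g S 0 1 -> LOW h g S Phi 0 1 ->
  path (fun u v : R => u < v) a s -> 0 <= a -> last a s <= 1 ->
  \sum_(d <- pairmap (fun u v =>
       inf [set h (g w) | w in [set w | u <= w <= v]] * (arclen g v - arclen g u)) a s) d
  <= Phi (last a s) - Phi a.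
Proof.
move=> L Rc W; elim: s a => [|x s IH] a /=; first by rewrite big_nil subrr.
move=> /andP[ax px] a0 l1; rewrite big_cons.
have xl := last_ge px.
have x1 := le_trans xl l1.
have a1 : a <= 1 := le_trans (ltW ax) x1.
rewrite (arclen_eq L Rc (le_trans a0 (ltW ax)) x1) (arclen_eq L Rc a0 a1).
have := W a x a0 (ltW ax) x1; rewrite /imset.
have -> : S x - S 0 - (S a - S 0) = S x - S a by ring.
have := IH x px (le_trans a0 (ltW ax)) l1; lra.
Qed.

End Glue.

Theorem good_k_alpha (R : realType) (n : nat) (alpha K B : R) (x y : 'rV[R]_n)
  (g : R -> 'rV[R]_n) : 0 < K ->
  good (fun z => powR (enorm z) (- alpha)) g K 0 1 B -> g 0 = x -> g 1 = y ->
  (k_alpha alpha x y <= B%:E)%E.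
Proof.
move=> K0 [S [P [L Rc W PB N]]] g0 g1.
have adm : admissible_path x y g.
  split => //.
  - by move=> t /andP[t0 t1]; apply: N.
  - move=> t /andP[t0 t1] e e0; exists (e / K); first by rewrite divr_gt0.
    move=> u /andP[u0 u1] ut.
    have [tu|ut'] := leP t u.
      have [h1 h2] := L t u t0 tu u1.
      rewrite ger0_norm ?subr_ge0 // in ut.
      rewrite ltr_pdivlMr // mulrC in ut; lra.
    have [h1 h2] := L u t u0 (ltW ut') t1.
    rewrite enormB; rewrite ltr0_norm ?subr_lt0 // in ut.
    rewrite ltr_pdivlMr // mulrC opprB in ut; lra.
  - by rewrite (path_length_eq L Rc ler01 (lexx 1)) ltry.
apply: (@le_trans _ _ (line_integral (fun z => powR (enorm z) (- alpha)) g)).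
  by apply: ereal_inf_lbound; exists g.
apply: ge_ereal_sup => z [s [ps ls] <-]; rewrite lee_fin.
apply: (le_trans _ PB); rewrite -ls.
by apply: (lower_le L Rc W ps (lexx 0)); rewrite ls.
Qed.

Local Open Scope convex_scope.

Lemma bern (R : realType) (b t : R) : 0 <= b -> b <= 1 -> 0 < t ->
  powR t b <= b * t + (1 - b).
Proof.
move=> b0 b1 t0.
have := @concave_ln R (Itv01 b0 b1) t 1 t0 ltr01.
rewrite !convRE /= ln1 mulr0 addr0 mulr1.
have hp : 0 < b * t + (1 - b) by nra.
rewrite -ler_expR lnK ?posrE //.
by rewrite /powR gt_eqF // mulrC.
Qed.
Local Close Scope convex_scope.

Lemma key_ineq (R : realType) (al A B : R) : 0 <= al -> al < 1 -> 0 < B -> B <= A ->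
  powR A (- al) * (A - B) <= (powR A (1 - al) - powR B (1 - al)) / (1 - al).
Proof.
move=> a0 a1 B0 BA.
have A0 : 0 < A := lt_le_trans B0 BA.
pose t := B / A.
have t0 : 0 < t by rewrite divr_gt0.
have b0 : 0 < 1 - al by rewrite subr_gt0.
have hb : powR t (1 - al) <= (1 - al) * t + (1 - (1 - al)).
  by apply: bern => //; [exact: ltW | lra].
have eBt : B = t * A by rewrite /t; field; rewrite gt_eqF.
have eB : powR B (1 - al) = powR t (1 - al) * powR A (1 - al).
  by rewrite eBt powRM // ltW.
have eA : powR A (- al) * A = powR A (1 - al).
  rewrite -{2}(powRr1 (ltW A0)) -powRD; last by rewrite (gt_eqF A0) implybT.
  by rewrite addrC.
have PA : 0 < powR A (1 - al) by rewrite powR_gt0.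
have -> : powR A (- al) * (A - B) = powR A (1 - al) * (1 - t).
  by rewrite -eA eBt; ring.
rewrite eB ler_pdivlMr //.
set pt := powR t _ in hb *; set PP := powR A _ in PA *.
nra.
Qed.

Section Pieces.
Variables (R : realType) (n : nat).
Implicit Types (p q z : 'rV[R]_n).

Lemma enorm0 : enorm (0 : 'rV[R]_n) = 0.
Proof. by rewrite -[0 : 'rV[R]_n](scale0r 0) enormZ normr0 mul0r. Qed.

Lemma enorm_neq0 z : 0 < enorm z -> z != 0.
Proof. by move=> h; apply/eqP => e; rewrite e enorm0 ltxx in h. Qed.

Lemma seg_lb p q (l m : R) : 0 <= dot p q -> 0 <= l -> l <= 1 -> 0 <= m ->
  m <= enorm p -> m <= enorm q -> m / 2 <= enorm ((1 - l) *: p + l *: q).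
Proof.
move=> D l0 l1 m0 mp mq.
rewrite -[m / 2]ger0_norm ?divr_ge0 // -sqrtr_sqr enormE ler_sqrt ?sqr_ge0 //.
rewrite dotDl !dotDr !dotZl !dotZr (dotC q p).
have A : m ^+ 2 <= dot p p by rewrite -enorm_sqr lerXn2r // nnegrE ?enorm_ge0.
have B : m ^+ 2 <= dot q q by rewrite -enorm_sqr lerXn2r // nnegrE ?enorm_ge0.
have h1 : 0 <= (1 - l) ^+ 2 * (dot p p - m ^+ 2) by rewrite mulr_ge0 ?sqr_ge0 ?subr_ge0.
have h2 : 0 <= l ^+ 2 * (dot q q - m ^+ 2) by rewrite mulr_ge0 ?sqr_ge0 ?subr_ge0.
have h3 : 0 <= l * (1 - l) * dot p q by rewrite !mulr_ge0 ?subr_ge0.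
have h4 : 0 <= m ^+ 2 * (2 * l - 1) ^+ 2 by rewrite mulr_ge0 ?sqr_ge0.
  nra.
exact: dot_ge0.
Qed.

Lemma powR_anti (al x y : R) : 0 <= al -> 0 < x -> x <= y -> powR y (- al) <= powR x (- al).
Proof.
move=> a0 x0 xy; rewrite !powRN lef_pV2 ?posrE ?powR_gt0 //; last exact: lt_le_trans xy.
by apply: ge0_ler_powR => //; rewrite nnegrE ltW // (lt_le_trans x0).
Qed.

Definition seg (a b : R) p q := fun t : R => p + ((t - a) / (b - a)) *: (q - p).
Definition segS (a b : R) p q := fun t : R => (t - a) / (b - a) * enorm (q - p).

Lemma seg_sub a b p q u v : seg a b p q v - seg a b p q u = ((v - u) / (b - a)) *: (q - p).
Proof. by apply/rowP => i; rewrite !mxE; ring. Qed.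

Lemma seg_conv a b p q t : seg a b p q t = (1 - (t - a) / (b - a)) *: p + ((t - a) / (b - a)) *: q.
Proof. by apply/rowP => i; rewrite !mxE; ring. Qed.

Lemma seg_a a b p q : seg a b p q a = p.
Proof. by rewrite /seg subrr mul0r scale0r addr0. Qed.

Lemma seg_b a b p q : a < b -> seg a b p q b = q.
Proof. by move=> ab; rewrite /seg divff ?scale1r ?subrKC // subr_eq0 gt_eqF. Qed.

Lemma lam_bnd (a b t : R) : a < b -> a <= t -> t <= b -> 0 <= (t - a) / (b - a) <= 1.
Proof.
move=> ab at_ tb; have ba : 0 < b - a by rewrite subr_gt0.
apply/andP; split; first by apply: divr_ge0; lra.
rewrite ler_pdivrMr // mul1r; lra.
Qed.

Lemma seg_LIP a b p q K : a < b -> enorm (q - p) / (b - a) <= K ->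
  LIP (seg a b p q) (segS a b p q) K a b.
Proof.
move=> ab HK u v au uv vb; have ba : 0 < b - a by rewrite subr_gt0.
have l0 : 0 <= (v - u) / (b - a) by rewrite divr_ge0 // ?subr_ge0 // ltW.
rewrite seg_sub enormZ ger0_norm //.
have -> : segS a b p q v - segS a b p q u = (v - u) / (b - a) * enorm (q - p).
  by rewrite /segS; field; rewrite gt_eqF.
split => //.
have -> : (v - u) / (b - a) * enorm (q - p) = (v - u) * (enorm (q - p) / (b - a)) by ring.
by rewrite [K * _]mulrC ler_wpM2l // subr_ge0.
Qed.

Lemma seg_REACH a b p q : a < b -> REACH (seg a b p q) (segS a b p q) a b.
Proof.
move=> ab t; rewrite le_eqVlt => /predU1P[<- _|at_ tb].
  by exists [::]; split => //; rewrite subrr /chord_sum big_nil.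
exists [:: t]; split => //=; first by rewrite at_.
rewrite chord_sum_cons /chord_sum big_nil addr0 seg_sub enormZ.
have l0 : 0 <= (t - a) / (b - a) by rewrite divr_ge0 // subr_ge0 ltW.
rewrite ger0_norm //.
by rewrite /segS subrr !mul0r subr0.
Qed.

Local Notation h al := (fun z : 'rV[R]_n => powR (enorm z) (- al)).

Lemma h_ge0 al z : 0 <= h al z.
Proof. exact: powR_ge0. Qed.

Lemma good_mid al a b p q K : 0 <= al -> a < b -> p != 0 -> q != 0 -> 0 <= dot p q ->
  enorm (q - p) / (b - a) <= K ->
  good (h al) (seg a b p q) K a b
    (powR (Num.min (enorm p) (enorm q) / 2) (- al) * enorm (q - p)).
Proof.
move=> a0 ab p0 q0 D HK.
set m := Num.min (enorm p) (enorm q).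
have m0 : 0 < m by rewrite /m lt_min !enorm_gt0.
have mp : m <= enorm p by rewrite /m ge_min lexx.
have mq : m <= enorm q by rewrite /m ge_min lexx orbT.
set M := powR (m / 2) (- al).
have lbt : forall t, a <= t -> t <= b -> m / 2 <= enorm (seg a b p q t).
  move=> t at_ tb; have /andP[l0 l1] := lam_bnd ab at_ tb.
  by rewrite seg_conv; apply: seg_lb => //; apply: ltW.
have L := seg_LIP ab HK.
exists (segS a b p q), (fun t => M * segS a b p q t); split.
- exact: L.
- exact: seg_REACH.
- move=> u v au uv vb.
  have [l1 _] := L u v au uv vb.
  have d0 : 0 <= segS a b p q v - segS a b p q u := le_trans (enorm_ge0 _) l1.
  apply: (le_trans (ler_wpM2r d0 (inf_le_pt (seg a b p q) (@h_ge0 al) (lexx u) uv))).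
  rewrite -mulrBr ler_wpM2r //.
  apply: powR_anti => //; first by rewrite divr_gt0.
  exact: lbt (le_trans uv vb).
- rewrite -mulrBr /segS subrr !mul0r subr0 divff ?mul1r // subr_eq0 gt_eqF //.
- move=> t at_ tb; apply: enorm_neq0; apply: lt_le_trans (lbt t at_ tb).
  by rewrite divr_gt0.
Qed.


Lemma good_in al a b z c K : 0 <= al -> al < 1 -> a < b -> z != 0 -> 0 < c -> c <= 1 ->
  enorm (c *: z - z) / (b - a) <= K ->
  good (h al) (seg a b z (c *: z)) K a b
    ((powR (enorm z) (1 - al) - powR (c * enorm z) (1 - al)) / (1 - al)).
Proof.
move=> a0 a1 ab z0 c0 c1 HK.
have nz := enorm_gt0 z0.
pose lam t := (t - a) / (b - a).
pose r t := (1 - lam t * (1 - c)) * enorm z.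
have gE : forall t, seg a b z (c *: z) t = (1 - lam t * (1 - c)) *: z.
  by move=> t; apply/rowP => i; rewrite !mxE /lam; ring.
have rpos : forall t, a <= t -> t <= b -> 0 < r t.
  move=> t at_ tb; have /andP[l0 l1] := lam_bnd ab at_ tb.
  rewrite /r mulr_gt0 //; rewrite -/(lam t) in l0 l1; nra.
have nE : forall t, a <= t -> t <= b -> enorm (seg a b z (c *: z) t) = r t.
  move=> t at_ tb; rewrite gE enormZ ger0_norm // -(pmulr_lge0 _ nz).
  exact: ltW (rpos t at_ tb).
have lE : enorm (c *: z - z) = (1 - c) * enorm z.
  have -> : c *: z - z = (c - 1) *: z by apply/rowP => i; rewrite !mxE; ring.
  by rewrite enormZ ler0_norm ?subr_le0 // opprB.
have dS : forall u v, segS a b z (c *: z) v - segS a b z (c *: z) u = r u - r v.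
  by move=> u v; rewrite /segS lE /r /lam; ring.
have L := seg_LIP ab HK.
pose P t := - powR (r t) (1 - al) / (1 - al).
exists (segS a b z (c *: z)), P; split.
- exact: L.
- exact: seg_REACH.
- move=> u v au uv vb.
  have [l1 _] := L u v au uv vb.
  have d0 : 0 <= segS a b z (c *: z) v - segS a b z (c *: z) u := le_trans (enorm_ge0 _) l1.
  apply: (le_trans (ler_wpM2r d0 (inf_le_pt (seg a b z (c *: z)) (@h_ge0 al) (lexx u) uv))).
  rewrite /= nE ?(le_trans uv vb) // dS.
  rewrite dS in d0.
  have -> : P v - P u = (powR (r u) (1 - al) - powR (r v) (1 - al)) / (1 - al).
    by rewrite /P; ring.
  apply: key_ineq => //; first exact: rpos (le_trans au uv) vb.
  by rewrite -subr_ge0.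
- have ra : r a = enorm z by rewrite /r /lam subrr !mul0r subr0 mul1r.
  have rb : r b = c * enorm z.
    by rewrite /r /lam divff ?subr_eq0 ?gt_eqF // mul1r opprB addrC subrK.
  have -> : P b - P a = (powR (enorm z) (1 - al) - powR (c * enorm z) (1 - al)) / (1 - al).
    by rewrite /P ra rb; ring.
  exact: lexx.
- move=> t at_ tb; apply: enorm_neq0; rewrite nE //; exact: rpos.
Qed.

Lemma good_out al a b z c K : 0 <= al -> al < 1 -> a < b -> z != 0 -> 0 < c -> c <= 1 ->
  enorm (z - c *: z) / (b - a) <= K ->
  good (h al) (seg a b (c *: z) z) K a b
    ((powR (enorm z) (1 - al) - powR (c * enorm z) (1 - al)) / (1 - al)).
Proof.
move=> a0 a1 ab z0 c0 c1 HK.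
have nz := enorm_gt0 z0.
pose lam t := (t - a) / (b - a).
pose r t := (c + lam t * (1 - c)) * enorm z.
have gE : forall t, seg a b (c *: z) z t = (c + lam t * (1 - c)) *: z.
  by move=> t; apply/rowP => i; rewrite !mxE /lam; ring.
have rpos : forall t, a <= t -> t <= b -> 0 < r t.
  move=> t at_ tb; have /andP[l0 l1] := lam_bnd ab at_ tb.
  rewrite /r mulr_gt0 //; rewrite -/(lam t) in l0 l1; nra.
have nE : forall t, a <= t -> t <= b -> enorm (seg a b (c *: z) z t) = r t.
  move=> t at_ tb; rewrite gE enormZ ger0_norm // -(pmulr_lge0 _ nz).
  exact: ltW (rpos t at_ tb).
have lE : enorm (z - c *: z) = (1 - c) * enorm z.
  have -> : z - c *: z = (1 - c) *: z by apply/rowP => i; rewrite !mxE; ring.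
  by rewrite enormZ ger0_norm ?subr_ge0.
have dS : forall u v, segS a b (c *: z) z v - segS a b (c *: z) z u = r v - r u.
  by move=> u v; rewrite /segS lE /r /lam; ring.
have L := seg_LIP ab HK.
pose P t := powR (r t) (1 - al) / (1 - al).
exists (segS a b (c *: z) z), P; split.
- exact: L.
- exact: seg_REACH.
- move=> u v au uv vb.
  have [l1 _] := L u v au uv vb.
  have d0 : 0 <= segS a b (c *: z) z v - segS a b (c *: z) z u := le_trans (enorm_ge0 _) l1.
  apply: (le_trans (ler_wpM2r d0 (inf_le_pt (seg a b (c *: z) z) (@h_ge0 al) uv (lexx v)))).
  rewrite /= nE ?(le_trans au uv) // dS.
  rewrite dS in d0.
  have -> : P v - P u = (powR (r v) (1 - al) - powR (r u) (1 - al)) / (1 - al).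
    by rewrite /P; ring.
  apply: key_ineq => //; first exact: rpos au (le_trans uv vb).
  by rewrite -subr_ge0.
- have ra : r a = c * enorm z by rewrite /r /lam subrr !mul0r addr0.
  have rb : r b = enorm z.
    by rewrite /r /lam divff ?subr_eq0 ?gt_eqF // mul1r addrC subrK mul1r.
  have -> : P b - P a = (powR (enorm z) (1 - al) - powR (c * enorm z) (1 - al)) / (1 - al).
    by rewrite /P ra rb; ring.
  exact: lexx.
- move=> t at_ tb; apply: enorm_neq0; rewrite nE //; exact: rpos.
Qed.

End Pieces.
Lemma perp_m (R : realType) m (x : 'rV[R]_m.+2) : exists w : 'rV[R]_m.+2, w != 0 /\ dot x w = 0.
Proof.
pose i0 : 'I_m.+2 := ord0.
pose i1 : 'I_m.+2 := lift ord0 ord0.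
have [/andP[/eqP x0 /eqP x1]|hx] := boolP ((x ord0 i0 == 0) && (x ord0 i1 == 0)).
  exists (\row_j ((j == i0)%:R : R)); split.
    apply/eqP => /rowP /(_ i0); rewrite !mxE eqxx => /eqP; by rewrite oner_eq0.
  rewrite /dot big_ord_recl /= !mxE eqxx mulr1 x0 add0r big1 // => j _.
  by rewrite !mxE /= mulr0.
exists (\row_j (if j == i0 then - x ord0 i1 else if j == i1 then x ord0 i0 else 0)); split.
  apply/eqP => /rowP H; move: hx; have := H i0; have := H i1.
  rewrite !mxE /= => -> /eqP; rewrite oppr_eq0 => /eqP ->; by rewrite eqxx.
rewrite /dot big_ord_recl big_ord_recl /= !mxE /= big1.
  by rewrite addr0; ring.
by move=> j _; rewrite !mxE /= mulr0.
Qed.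

Lemma perp (R : realType) n (hn : (2 <= n)%N) (x : 'rV[R]_n) :
  exists w : 'rV[R]_n, w != 0 /\ dot x w = 0.
Proof. by case: n hn x => [|[|m]] // _ x; apply: perp_m. Qed.

Lemma mid_bound (R : realType) n (al e : R) (u v : 'rV[R]_n) : 0 < e ->
  powR (Num.min (enorm (e *: u)) (enorm (e *: v)) / 2) (- al) * enorm (e *: v - e *: u)
  = powR e (1 - al) * (powR (Num.min (enorm u) (enorm v) / 2) (- al) * enorm (v - u)).
Proof.
move=> e0.
have e0' := ltW e0.
rewrite !enormZ -scalerBr enormZ (ger0_norm e0') -(minr_pMr _ _ e0') -mulrA.
have m0 : 0 <= Num.min (enorm u) (enorm v) / 2.
  by rewrite divr_ge0 // le_min !enorm_ge0.
rewrite (powRM _ e0' m0).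
have eA : powR e (- al) * e = powR e (1 - al).
  rewrite -{2}(powRr1 (ltW e0)) -powRD; last by rewrite (gt_eqF e0) implybT.
  by rewrite addrC.
rewrite -eA; ring.
Qed.

Local Close Scope classical_set_scope.
Unset Implicit Arguments.

Theorem corollary3p3 (R : realType) (n : nat) (alpha : R)
  (hn : (2 <= n)%N) (ha0 : 0 <= alpha) (ha1 : alpha < 1)
  (x y : 'rV[R]_n) (hx : x != 0) (hy : y != 0) :
  (k_alpha alpha x y <=
   ((powR (enorm x) (1 - alpha) + powR (enorm y) (1 - alpha)) / (1 - alpha))%:E)%E.
Proof.
have [w [w0 xw]] := perp hn x.
pose p := if 0 <= dot w y then w else - w.
have p0 : p != 0 by rewrite /p; case: ifP => // _; rewrite oppr_eq0.
have xp : dot x p = 0.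
  by rewrite /p; case: ifP => // _; rewrite dotC dotNl dotC xw oppr0.
have py : 0 <= dot p y.
  rewrite /p; case: ifP => // /negbT; rewrite -ltNge dotNl oppr_ge0 => /ltW //.
have be0 : 0 < 1 - alpha by rewrite subr_gt0.
apply/lee_addgt0Pr => d d0.
pose C := powR (Num.min (enorm x) (enorm p) / 2) (- alpha) * enorm (p - x)
        + powR (Num.min (enorm p) (enorm y) / 2) (- alpha) * enorm (y - p).
have C0 : 0 <= C by rewrite addr_ge0 // mulr_ge0 ?powR_ge0 ?enorm_ge0.
have dC0 : 0 < d / (C + 1) by rewrite divr_gt0 // ltr_wpDl.
pose eps := Num.min 1 (powR (d / (C + 1)) (1 / (1 - alpha))).
have eps0 : 0 < eps by rewrite lt_min ltr01 powR_gt0.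
have eps1 : eps <= 1 by rewrite ge_min lexx.
have epsb : powR eps (1 - alpha) <= d / (C + 1).
  have le1 : eps <= powR (d / (C + 1)) (1 / (1 - alpha)) by rewrite ge_min lexx orbT.
  apply: (le_trans (ge0_ler_powR (ltW be0) _ _ le1)).
  - by rewrite nnegrE ltW.
  - by rewrite nnegrE powR_ge0.
  by rewrite -powRrM mul1r mulVf ?gt_eqF // powRr1 // ltW.
pose l1 := enorm (eps *: x - x).
pose l2 := enorm (eps *: p - eps *: x).
pose l3 := enorm (eps *: y - eps *: p).
pose l4 := enorm (y - eps *: y).
pose K := 4 * (l1 + l2 + l3 + l4) + 1.
have K0 : 0 < K by rewrite /K ltr_wpDl // mulr_ge0 // !addr_ge0 ?enorm_ge0.
have hl : 0 <= l1 /\ 0 <= l2 /\ 0 <= l3 /\ 0 <= l4 by rewrite !enorm_ge0.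
have epsx : eps *: x != 0 by rewrite scaler_eq0 negb_or gt_eqF.
have epsp : eps *: p != 0 by rewrite scaler_eq0 negb_or gt_eqF.
have epsy : eps *: y != 0 by rewrite scaler_eq0 negb_or gt_eqF.
have q1 : (0:R) < 1/4 by lra.
have q2 : (1/4:R) < 1/2 by lra.
have q3 : (1/2:R) < 3/4 by lra.
have q4 : (3/4:R) < 1 by lra.
have G1 : good (fun z => powR (enorm z) (- alpha)) (seg 0 (1/4) x (eps *: x)) K 0 (1/4)
    ((powR (enorm x) (1 - alpha) - powR (eps * enorm x) (1 - alpha)) / (1 - alpha)).
  apply: good_in => //.
  have -> : enorm (eps *: x - x) / (1 / 4 - 0) = 4 * l1 by rewrite /l1; field.
  rewrite /K; lra.
have G2 : good (fun z => powR (enorm z) (- alpha)) (seg (1/4) (1/2) (eps *: x) (eps *: p)) K (1/4) (1/2)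
    (powR (Num.min (enorm (eps *: x)) (enorm (eps *: p)) / 2) (- alpha) * enorm (eps *: p - eps *: x)).
  apply: good_mid => //.
    by rewrite dotZl dotZr xp !mulr0.
  have -> : enorm (eps *: p - eps *: x) / (1 / 2 - 1 / 4) = 4 * l2 by rewrite /l2; field.
  rewrite /K; lra.
have G3 : good (fun z => powR (enorm z) (- alpha)) (seg (1/2) (3/4) (eps *: p) (eps *: y)) K (1/2) (3/4)
    (powR (Num.min (enorm (eps *: p)) (enorm (eps *: y)) / 2) (- alpha) * enorm (eps *: y - eps *: p)).
  apply: good_mid => //.
    by rewrite dotZl dotZr !mulr_ge0 // ltW.
  have -> : enorm (eps *: y - eps *: p) / (3 / 4 - 1 / 2) = 4 * l3 by rewrite /l3; field.
  rewrite /K; lra.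
have G4 : good (fun z => powR (enorm z) (- alpha)) (seg (3/4) 1 (eps *: y) y) K (3/4) 1
    ((powR (enorm y) (1 - alpha) - powR (eps * enorm y) (1 - alpha)) / (1 - alpha)).
  apply: good_out => //.
  have -> : enorm (y - eps *: y) / (1 - 3 / 4) = 4 * l4 by rewrite /l4; field.
  rewrite /K; lra.
have h0 : forall z : 'rV[R]_n, 0 <= powR (enorm z) (- alpha) by move=> z; apply: powR_ge0.
have e34 : seg (1/2) (3/4) (eps *: p) (eps *: y) (3/4) = seg (3/4) 1 (eps *: y) y (3/4).
  by rewrite seg_b ?seg_a //; lra.
have G34 := good_glue h0 (ltac:(lra) : 1/2 <= 3/4 :> R) (ltac:(lra) : 3/4 <= 1 :> R) e34 G3 G4.
have e234 : seg (1/4) (1/2) (eps *: x) (eps *: p) (1/2) =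
    glue (3/4) (seg (1/2) (3/4) (eps *: p) (eps *: y)) (seg (3/4) 1 (eps *: y) y) (1/2).
  by rewrite glue_l ?seg_b ?seg_a //; lra.
have G234 := good_glue h0 (ltac:(lra) : 1/4 <= 1/2 :> R) (ltac:(lra) : 1/2 <= 1 :> R) e234 G2 G34.
have e1234 : seg 0 (1/4) x (eps *: x) (1/4) =
    glue (1/2) (seg (1/4) (1/2) (eps *: x) (eps *: p))
      (glue (3/4) (seg (1/2) (3/4) (eps *: p) (eps *: y)) (seg (3/4) 1 (eps *: y) y)) (1/4).
  by rewrite glue_l ?seg_b ?seg_a //; lra.
have G := good_glue h0 (ltac:(lra) : 0 <= 1/4 :> R) (ltac:(lra) : 1/4 <= 1 :> R) e1234 G1 G234.
have r0 : (0:R) <= 1/4 by lra.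
have r1 : (1/4:R) <= 1 by lra.
have r2 : (1/2:R) <= 1 by lra.
have r3 : (3/4:R) <= 1 by lra.
have gg0 : glue (1/4) (seg 0 (1/4) x (eps *: x))
    (glue (1/2) (seg (1/4) (1/2) (eps *: x) (eps *: p))
      (glue (3/4) (seg (1/2) (3/4) (eps *: p) (eps *: y)) (seg (3/4) 1 (eps *: y) y))) 0 = x.
  by rewrite glue_l // seg_a.
have gg1 : glue (1/4) (seg 0 (1/4) x (eps *: x))
    (glue (1/2) (seg (1/4) (1/2) (eps *: x) (eps *: p))
      (glue (3/4) (seg (1/2) (3/4) (eps *: p) (eps *: y)) (seg (3/4) 1 (eps *: y) y))) 1 = y.
  by rewrite (glue_r e1234) // (glue_r e234) // (glue_r e34) // seg_b.
have H := good_k_alpha K0 G gg0 gg1.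
apply: (le_trans H); rewrite lee_fin.
rewrite !mid_bound //.
set Px := powR (enorm x) (1 - alpha); set Py := powR (enorm y) (1 - alpha).
have b1 : (Px - powR (eps * enorm x) (1 - alpha)) / (1 - alpha) <= Px / (1 - alpha).
  by rewrite ler_pM2r ?invr_gt0 // gerBl powR_ge0.
have b4 : (Py - powR (eps * enorm y) (1 - alpha)) / (1 - alpha) <= Py / (1 - alpha).
  by rewrite ler_pM2r ?invr_gt0 // gerBl powR_ge0.
have bC : powR eps (1 - alpha) * C <= d.
  apply: (le_trans (ler_wpM2r C0 epsb)).
  rewrite mulrAC ler_pdivrMr ?ltr_wpDl //; nra.
rewrite mulrDl; rewrite /C in bC; lra.
Qed.
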